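(* Let $F_2,F_4$ be real numbers with $F_4\ge F_2^2$, and let $p=\frac{3}{\sqrt{21}}$. Then \[(1-p)\,\frac{3+3F_2}{4}+p\,\frac{15-6F_2-F_4}{16}\;\le\;\frac{3(\sqrt{21}-4)}{2}\;<\;0.8739.\] (Interpretation: if the average performance on $3$-clauses is $\frac{3+3F_2}{4}$, the average performance on $5$-clauses is $\frac{15-6F_2-F_4}{16}$, and $F_4\ge F_2^2$, then on the distribution choosing a random $3$-clause with probability $1-\frac{3}{\sqrt{21}}$ and a random $5$-clause with probability $\frac{3}{\sqrt{21}}$, the average performance is at most $\frac{3(\sqrt{21}-4)}{2}$.) *)

(* Defs.v *)
From Stdlib Require Export Reals.

(* Main.v *)
Require Import Defs.
From Stdlib Require Import Reals Lra Psatz.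
Open Scope R_scope.

Theorem mainTheorem6 (F2 F4 : R) (hF : F4 >= F2 ^ 2) :
  let p := 3 / sqrt 21 in
  (1 - p) * ((3 + 3 * F2) / 4) + p * ((15 - 6 * F2 - F4) / 16)
    <= 3 * (sqrt 21 - 4) / 2
  /\ 3 * (sqrt 21 - 4) / 2 < 8739 / 10000.
Proof.
  intros p.
  assert (Hs2 : sqrt 21 * sqrt 21 = 21) by (apply sqrt_sqrt; lra).
  assert (Hs0 : 0 < sqrt 21) by (apply sqrt_lt_R0; lra).
  set (s := sqrt 21) in *.
  split.
  - unfold p.
    assert (Hsq : 0 <= (F2 + 9 - 2 * s) ^ 2) by apply pow2_ge_0.
    apply Rmult_le_reg_r with (16 * s); [lra|].
    replace (((1 - 3 / s) * ((3 + 3 * F2) / 4) + 3 / s * ((15 - 6 * F2 - F4) / 16)) * (16 * s))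
      with ((s - 3) * 4 * (3 + 3 * F2) + 3 * (15 - 6 * F2 - F4)) by (field; lra).
    nra.
  - nra.
Qed.
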